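(* Let $M_3$ be a number such that for any three mutually orthogonal affine planes in $\mathbb{R}^3$ at least one of them meets $\Gamma=\{\gamma(t):t\ge M_3\}$ in at most one point, where $\gamma(t)=(t,t^2,t^3)$, and assume $M_3>0$. Then for any three mutually orthogonal affine planes $H_1,H_2,H_3\subset\mathbb{R}^3$, the set $\Gamma\cap(H_1\cup H_2\cup H_3)$ has at most $6$ points.
   Context: Affine planes are mutually orthogonal if their normal vectors are pairwise orthogonal. *)

(* Defs.v *)
From mathcomp Require Import all_boot all_order all_algebra.
From mathcomp Require Export reals.
Set Implicit Arguments. Unset Strict Implicit. Unset Printing Implicit Defensive.
Import Order.TTheory GRing.Theory Num.Theory.
Local Open Scope ring_scope.

Definition pt (R : realType) := (R * R * R)%type.

Definition dot3 (R : realType) (u v : pt R) : R :=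
  u.1.1 * v.1.1 + u.1.2 * v.1.2 + u.2 * v.2.

Definition gamma (R : realType) (t : R) : pt R := (t, t ^+ 2, t ^+ 3).

(* An affine plane is given by a nonzero normal vector n and an offset c:
   H = { x | <n, x> = c }.  *)
Record plane (R : realType) := Plane { pnormal : pt R; poffset : R }.

Definition is_plane (R : realType) (H : plane R) : Prop := pnormal H <> (0, 0, 0).

Definition in_plane (R : realType) (H : plane R) (x : pt R) : Prop :=
  dot3 (pnormal H) x = poffset H.

Definition mutually_orthogonal (R : realType) (H1 H2 H3 : plane R) : Prop :=
  [/\ dot3 (pnormal H1) (pnormal H2) = 0,
      dot3 (pnormal H1) (pnormal H3) = 0 &
      dot3 (pnormal H2) (pnormal H3) = 0].

Definition Gamma (R : realType) (M : R) (x : pt R) : Prop :=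
  exists t : R, M <= t /\ x = gamma t.

Definition at_most (R : realType) (k : nat) (A : pt R -> Prop) : Prop :=
  forall s : seq (pt R), uniq s -> (forall x, x \in s -> A x) -> (size s <= k)%N.

Definition good_M3 (R : realType) (M : R) : Prop :=
  forall H1 H2 H3 : plane R,
    is_plane H1 -> is_plane H2 -> is_plane H3 ->
    mutually_orthogonal H1 H2 H3 ->
    [\/ at_most 1 (fun x => Gamma M x /\ in_plane H1 x),
        at_most 1 (fun x => Gamma M x /\ in_plane H2 x) |
        at_most 1 (fun x => Gamma M x /\ in_plane H3 x)].

(* Main.v *)
Require Import Defs.
From mathcomp Require Import all_boot all_order all_algebra.
From mathcomp Require Import reals.
From mathcomp Require Import boolp.
From mathcomp Require Import ring lra.
Import Order.TTheory GRing.Theory Num.Theory.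
Local Open Scope ring_scope.

Section Aux.
Variable R : realType.
Set Implicit Arguments.

Lemma key3 (n1 n2 n3 c t1 t2 t3 : R) : t1 != t2 -> t1 != t3 -> t2 != t3 ->
  n1*t1 + n2*t1^+2 + n3*t1^+3 = c ->
  n1*t2 + n2*t2^+2 + n3*t2^+3 = c ->
  n1*t3 + n2*t3^+2 + n3*t3^+3 = c ->
  n2 = - (n3*(t1+t2+t3)) /\ n1 = n3*(t1*t2+t1*t3+t2*t3).
Proof.
move=> d12 d13 d23 e1 e2 e3.
have h12 : (t1 - t2) * (n1 + n2*(t1+t2) + n3*(t1^+2+t1*t2+t2^+2)) =
  (n1*t1 + n2*t1^+2 + n3*t1^+3) - (n1*t2 + n2*t2^+2 + n3*t2^+3) by ring.
have h13 : (t1 - t3) * (n1 + n2*(t1+t3) + n3*(t1^+2+t1*t3+t3^+2)) =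
  (n1*t1 + n2*t1^+2 + n3*t1^+3) - (n1*t3 + n2*t3^+2 + n3*t3^+3) by ring.
rewrite e1 e2 subrr in h12; rewrite e1 e3 subrr in h13.
move/eqP: h12; rewrite mulf_eq0 subr_eq0 (negbTE d12) /= => /eqP q12.
move/eqP: h13; rewrite mulf_eq0 subr_eq0 (negbTE d13) /= => /eqP q13.
have h : (t2 - t3) * (n2 + n3*(t1+t2+t3)) =
  (n1 + n2*(t1+t2) + n3*(t1^+2+t1*t2+t2^+2)) - (n1 + n2*(t1+t3) + n3*(t1^+2+t1*t3+t3^+2)) by ring.
rewrite q12 q13 subrr in h.
move/eqP: h; rewrite mulf_eq0 subr_eq0 (negbTE d23) /= addr_eq0 => /eqP E2.
split=> //.
rewrite E2 in q12.
have : n1 = n1 + - (n3 * (t1 + t2 + t3)) * (t1 + t2) + n3 * (t1 ^+ 2 + t1 * t2 + t2 ^+ 2) - 0 + n3*(t1*t2+t1*t3+t2*t3) by ring.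
by rewrite -q12 subrr add0r.
Qed.

Definition onP (H : plane R) (t : R) :=
  (pnormal H).1.1 * t + (pnormal H).1.2 * t^+2 + (pnormal H).2 * t^+3 = poffset H.

Lemma three_on (M : R) (H : plane R) (s : seq (pt R)) : uniq s ->
  (forall x, x \in s -> Gamma M x /\ in_plane H x) -> (3 <= size s)%N ->
  exists t1 t2 t3, [/\ M <= t1, M <= t2, M <= t3, t1 != t2 & t1 != t3] /\
    [/\ t2 != t3, onP H t1, onP H t2 & onP H t3].
Proof.
case: s => [|x1 [|x2 [|x3 s]]] // us hs _.
have [[t1 [M1 E1]] p1] := hs x1 (mem_head _ _).
have [[t2 [M2 E2]] p2] : Gamma M x2 /\ in_plane H x2 by apply: hs; rewrite !inE eqxx orbT.
have [[t3 [M3 E3]] p3] : Gamma M x3 /\ in_plane H x3 by apply: hs; rewrite !inE eqxx !orbT.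
move: us; rewrite /= !inE !negb_or => /and4P [/and3P [n12 n13 _] /andP [n23 _] _ _].
subst x1 x2 x3.
exists t1, t2, t3; split.
- split=> //; apply/eqP => E; [move: n12|move: n13]; by rewrite E eqxx.
- split=> //; first by apply/eqP => E; move: n23; rewrite E eqxx.
  all: by [].
Qed.

Lemma four_on (M : R) (H : plane R) (s : seq (pt R)) : uniq s ->
  (forall x, x \in s -> Gamma M x /\ in_plane H x) -> (4 <= size s)%N ->
  exists t1 t2 t3 t4, [/\ t1 != t2, t1 != t3, t1 != t4, t2 != t3 & t2 != t4] /\
    [/\ t3 != t4, onP H t1, onP H t2, onP H t3 & onP H t4].
Proof.
case: s => [|x1 [|x2 [|x3 [|x4 s]]]] // us hs _.
have [[t1 [M1 E1]] p1] := hs x1 (mem_head _ _).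
have [[t2 [M2 E2]] p2] : Gamma M x2 /\ in_plane H x2 by apply: hs; rewrite !inE eqxx orbT.
have [[t3 [M3 E3]] p3] : Gamma M x3 /\ in_plane H x3 by apply: hs; rewrite !inE eqxx !orbT.
have [[t4 [M4 E4]] p4] : Gamma M x4 /\ in_plane H x4 by apply: hs; rewrite !inE eqxx !orbT.
move: us; rewrite /= !inE !negb_or => /and4P [/and4P [n12 n13 n14 _] /and3P [n23 n24 _] /andP [n34 _] _].
subst x1 x2 x3 x4.
have D : forall a b : R, gamma a != gamma b -> a != b.
  by move=> a b; apply: contraNneq => ->.
exists t1, t2, t3, t4; split; split; by [apply: D|].
Qed.

Definition A (M : R) (H : plane R) := fun x => Gamma M x /\ in_plane H x.

Lemma plane3 (M : R) (H : plane R) : is_plane H -> at_most 3 (A M H).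
Proof.
move=> pH s us hs; rewrite leqNgt; apply/negP => big.
have [t1 [t2 [t3 [t4 [[d12 d13 d14 d23 d24] [d34 p1 p2 p3 p4]]]]]] := @four_on M H s us hs big.
clear hs; apply: pH; move: p1 p2 p3 p4; rewrite /onP.
case: H => [[[n1 n2] n3] c] /= p1 p2 p3 p4.
have [a1 b1] := @key3 _ _ _ _ _ _ _ d12 d13 d23 p1 p2 p3.
have [a2 b2] := @key3 _ _ _ _ _ _ _ d12 d14 d24 p1 p2 p4.
have h : n3 * (t3 - t4) = 0.
  have : - (n3 * (t1 + t2 + t4)) - - (n3 * (t1 + t2 + t3)) = n2 - n2 by rewrite -a2 -a1.
  rewrite subrr => <-; ring.
move/eqP: h; rewrite mulf_eq0 subr_eq0 (negbTE d34) orbF => /eqP n30.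
by rewrite b1 a1 n30 !mul0r oppr0.
Qed.

Lemma pair2 (M : R) (H K : plane R) : 0 < M -> is_plane H -> is_plane K ->
  dot3 (pnormal H) (pnormal K) = 0 -> at_most 2 (A M H) \/ at_most 2 (A M K).
Proof.
move=> M0 pH pK dHK.
case: (pselect (at_most 2 (A M H))) => hH; [by left|right].
move=> s us hs; rewrite leqNgt; apply/negP => big.
apply: hH => s' us' hs'; rewrite leqNgt; apply/negP => big'.
have [t1 [t2 [t3 [[M1 M2 M3 d12 d13] [d23 p1 p2 p3]]]]] := @three_on M H s' us' hs' big'.
have [u1 [u2 [u3 [[N1 N2 N3 e12 e13] [e23 q1 q2 q3]]]]] := @three_on M K s us hs big.
clear hs hs'; move: pH pK dHK p1 p2 p3 q1 q2 q3; rewrite /onP /is_plane /dot3.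
case: H => [[[n1 n2] n3] c]; case: K => [[[m1 m2] m3] d] /= pH pK dHK p1 p2 p3 q1 q2 q3.
have [a1 b1] := @key3 _ _ _ _ _ _ _ d12 d13 d23 p1 p2 p3.
have [a2 b2] := @key3 _ _ _ _ _ _ _ e12 e13 e23 q1 q2 q3.
have n30 : n3 != 0.
  by apply/eqP => n30; apply: pH; rewrite b1 a1 n30 !mul0r oppr0.
have m30 : m3 != 0.
  by apply/eqP => m30; apply: pK; rewrite b2 a2 m30 !mul0r oppr0.
have t1p : 0 < t1 by apply: lt_le_trans M1.
have t2p : 0 < t2 by apply: lt_le_trans M2.
have t3p : 0 < t3 by apply: lt_le_trans M3.
have u1p : 0 < u1 by apply: lt_le_trans N1.
have u2p : 0 < u2 by apply: lt_le_trans N2.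
have u3p : 0 < u3 by apply: lt_le_trans N3.
have pos : 0 < (t1*t2+t1*t3+t2*t3)*(u1*u2+u1*u3+u2*u3) + (t1+t2+t3)*(u1+u2+u3) + 1.
  by rewrite !(addr_gt0, mulr_gt0).
move: dHK; rewrite a1 b1 a2 b2.
have -> : n3 * (t1 * t2 + t1 * t3 + t2 * t3) * (m3 * (u1 * u2 + u1 * u3 + u2 * u3)) +
  - (n3 * (t1 + t2 + t3)) * - (m3 * (u1 + u2 + u3)) + n3 * m3 =
  (n3 * m3) * ((t1*t2+t1*t3+t2*t3)*(u1*u2+u1*u3+u2*u3) + (t1+t2+t3)*(u1+u2+u3) + 1) by ring.
by move/eqP; rewrite !mulf_eq0 (negbTE n30) (negbTE m30) gt_eqF.
Qed.

Lemma union_am (k1 k2 : nat) (P Q : pt R -> Prop) : at_most k1 P -> at_most k2 Q ->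
  at_most (k1 + k2) (fun x => P x \/ Q x).
Proof.
move=> hP hQ s us hs.
rewrite -(count_predC (fun x => `[< P x >]) s) -!size_filter.
apply: leq_add.
  apply: hP; first exact: filter_uniq.
  by move=> x; rewrite mem_filter => /andP [/asboolP].
apply: hQ; first exact: filter_uniq.
move=> x; rewrite mem_filter => /andP [/asboolPn nP xs].
by case: (hs x xs).
Qed.

Lemma mono_am (k1 k2 : nat) (P Q : pt R -> Prop) : (k1 <= k2)%N ->
  (forall x, Q x -> P x) -> at_most k1 P -> at_most k2 Q.
Proof.
move=> le hQP hP s us hs; apply: leq_trans le; apply: hP => // x /hs; exact: hQP.
Qed.

End Aux.

Theorem mainTheorem5 (R : realType) (M3 : R) :
  good_M3 M3 -> 0 < M3 ->
  forall H1 H2 H3 : plane R,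
    is_plane H1 -> is_plane H2 -> is_plane H3 ->
    mutually_orthogonal H1 H2 H3 ->
    at_most 6 (fun x => Gamma M3 x /\ (in_plane H1 x \/ in_plane H2 x \/ in_plane H3 x)).
Proof.
move=> g M0 H1 H2 H3 p1 p2 p3 mo.
have mo' := mo; case: mo' => d12 d13 d23.
have a1 := @plane3 _ M3 _ p1; have a2 := @plane3 _ M3 _ p2; have a3 := @plane3 _ M3 _ p3.
have U : forall k1 k2 k3, (k1 + (k2 + k3) <= 6)%N ->
  at_most k1 (A M3 H1) -> at_most k2 (A M3 H2) -> at_most k3 (A M3 H3) ->
  at_most 6 (fun x => Gamma M3 x /\ (in_plane H1 x \/ in_plane H2 x \/ in_plane H3 x)).
  move=> k1 k2 k3 le b1 b2 b3.
  have b := union_am b1 (union_am b2 b3).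
  move=> s us hs; apply: leq_trans le; apply: b => // x /hs [G [h|[h|h]]].
  - by left.
  - by right; left.
  - by right; right.
case: (g H1 H2 H3 p1 p2 p3 mo) => h.
- case: (pair2 _ M0 p2 p3 d23) => h'; first exact: (U 1 2 3)%N.
  exact: (U 1 3 2)%N.
- case: (pair2 _ M0 p1 p3 d13) => h'; first exact: (U 2 1 3)%N.
  exact: (U 3 1 2)%N.
- case: (pair2 _ M0 p1 p2 d12) => h'; first exact: (U 2 3 1)%N.
  exact: (U 3 2 1)%N.
Qed.
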